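(* Let $H$ be a connected graph of order $a \in \mathbb{N}$. Then for every $b \in \mathbb{N}$, \[1 + (a-1)(b-2) \le R_\mathrm{cyc}(H, P_b^\mathrm{mon}) \le 1 + (a-1)(b-1).\]
   Context: All graphs are finite, simple and undirected, and a graph of order $n$ has vertex set $\{0,1,\ldots,n-1\}$; $K_n$ is the complete graph on $\{0,\ldots,n-1\}$. A $2$-edge-coloring of $K_n$ assigns each edge a color in $\{1,2\}$. For a graph $H$ and such a coloring, an embedding of $H$ in color $j$ is an injective map $\varphi\colon V(H)\to V(K_n)$ such that for every edge $uv$ of $H$ the edge $\{\varphi(u),\varphi(v)\}$ has color $j$; it is increasing up to a cyclic permutation if there exists $t\in V(H)$ such that $(\varphi(t),\varphi(t+1),\ldots,\varphi(|H|-1),\varphi(0),\varphi(1),\ldots,\varphi(t-1))$ is an increasing sequence. The cyclic Ramsey number $R_\mathrm{cyc}(H_1,H_2)$ is the smallest $n\in\mathbb{N}$ such that every $2$-edge-coloring of $K_n$ admits an embedding of $H_1$ in color $1$ or of $H_2$ in color $2$ that is increasing up to a cyclic permutation. The monotone path $P_n^\mathrm{mon}$ is the graph of order $n$ in which two vertices are adjacent iff they are consecutive integers. *)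

(* Defs.v *)
From mathcomp Require Import all_boot all_order all_algebra.
Set Implicit Arguments. Unset Strict Implicit. Unset Printing Implicit Defensive.

Definition simple_graph (n : nat) (E : rel 'I_n) : Prop :=
  symmetric E /\ irreflexive E.

Definition connected_graph (n : nat) (E : rel 'I_n) : Prop :=
  forall u v : 'I_n, connect E u v.

Definition Pmon (n : nat) : rel 'I_n :=
  fun i j => ((val i).+1 == val j) || ((val j).+1 == val i).

(* A 2-edge-colouring of K_n: colour c i j in {1,2} of the edge {i,j}
   (i <> j); symmetric, so it is a colouring of unordered edges. *)
Definition two_coloring (n : nat) (c : 'I_n -> 'I_n -> nat) : Prop :=
  (forall i j : 'I_n, i != j -> c i j = c j i) /\
  (forall i j : 'I_n, i != j -> c i j \in [:: 1; 2]).

Definition embedding_in_color (a n : nat) (E : rel 'I_a)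
    (c : 'I_n -> 'I_n -> nat) (j : nat) (phi : 'I_a -> 'I_n) : Prop :=
  injective phi /\ (forall u v : 'I_a, E u v -> c (phi u) (phi v) = j).

(* phi is increasing up to a cyclic permutation: for some t in V(H),
   (phi t, ..., phi (a-1), phi 0, ..., phi (t-1)) is increasing. *)
Definition cyc_increasing (a n : nat) (phi : 'I_a -> 'I_n) : Prop :=
  exists t : 'I_a,
    sorted ltn [seq val (phi k) | k <- rot t (enum 'I_a)].

Definition has_cyc_embedding (a n : nat) (E : rel 'I_a)
    (c : 'I_n -> 'I_n -> nat) (j : nat) : Prop :=
  exists phi : 'I_a -> 'I_n,
    embedding_in_color E c j phi /\ cyc_increasing phi.

Definition cyc_arrows (a1 a2 : nat) (E1 : rel 'I_a1) (E2 : rel 'I_a2)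
    (n : nat) : Prop :=
  forall c : 'I_n -> 'I_n -> nat, two_coloring c ->
    has_cyc_embedding E1 c 1 \/ has_cyc_embedding E2 c 2.

Definition is_Rcyc (a1 a2 : nat) (E1 : rel 'I_a1) (E2 : rel 'I_a2)
    (r : nat) : Prop :=
  cyc_arrows E1 E2 r /\ (forall n, n < r -> ~ cyc_arrows E1 E2 n).

(* Main.v *)
Require Import Defs.
From mathcomp Require Import all_boot all_order all_algebra.
From mathcomp Require Import zify.
From Stdlib Require Import Classical.
Import GRing.Theory Num.Theory.

Lemma least_ex (P : nat -> Prop) N : P N ->
  exists r, [/\ P r, (r <= N)%N & forall n, (n < r)%N -> ~ P n].
Proof.
elim: N {-2}N (leqnn N) => [|m IH] N HN PN.
  exists N; split => //; move: HN; rewrite leqn0 => /eqP -> //.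
case: (classic (exists n, (n < N)%N /\ P n)) => [[n [Hn Pn]]|Hno].
  have [|r [Pr Hr Hmin]] := IH n _ Pn; first by lia.
  exists r; split => //; lia.
exists N; split => // n Hn Pn; apply: Hno; by exists n.
Qed.

Lemma embed_seq (m N : nat) (x0 : 'I_N) (s : seq 'I_N) :
  (0 < m)%N -> size s = m -> sorted (fun x y : 'I_N => (x < y)%N) s ->
  exists phi : 'I_m -> 'I_N,
    [/\ injective phi, cyc_increasing phi & forall k, phi k = nth x0 s k].
Proof.
move=> m0 Hs Hsort; exists (fun k => nth x0 s k); split => //.
- move=> i j /eqP; rewrite nth_uniq ?Hs //.
    by move/eqP/val_inj.
  apply: sorted_uniq Hsort => [x y z|x]; [exact: ltn_trans | exact: ltnn].
- exists (Ordinal m0); rewrite rot0.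
  have -> : [seq val (nth x0 s k) | k : 'I_m <- enum 'I_m] =
            [seq val x | x : 'I_N <- [seq nth x0 s i | i : nat <- [seq val k | k : 'I_m <- enum 'I_m]]].
    by rewrite -!map_comp.
  by rewrite val_enum_ord -Hs -/(mkseq _ _) mkseq_nth sorted_map.
Qed.

Lemma upper_aux (a N : nat) (c : 'I_N -> 'I_N -> nat) :
  (forall i j : 'I_N, i != j -> c i j \in [:: 1; 2]) ->
  forall b (X : {set 'I_N}), ((a-1)*b < #|X|)%N ->
  (exists2 Y : {set 'I_N}, (a <= #|Y|)%N &
      forall u v, u \in Y -> v \in Y -> (u < v)%N -> c u v = 1)
  \/ (exists s : seq 'I_N, [/\ size s = b.+1,
        sorted (fun x y : 'I_N => (x < y)%N && (c x y == 2)) s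
        & {subset s <= X}]).
Proof.
move=> Hc; elim=> [|b IH] X HX.
  right; have /card_gt0P [x xX] : (0 < #|X|)%N by lia.
  by exists [:: x]; split => // y; rewrite inE => /eqP ->.
pose A := [set v in X | [forall u in X, (u < v)%N ==> (c u v != 2)]].
have AX : A \subset X by apply/subsetP => v; rewrite inE => /andP [].
case: (leqP a #|A|) => HA.
  left; exists A => // u v uA vA uv.
  move: vA; rewrite inE => /andP [_ /forall_inP /(_ u)].
  have uX : u \in X by apply: (subsetP AX).
  move=> /(_ uX); rewrite uv /= => ne2.
  have : c u v \in [:: 1; 2] by apply: Hc; rewrite neq_ltn uv.
  by rewrite !inE (negbTE ne2) orbF => /eqP.
have HXA : ((a-1)*b < #|X :\: A|)%N.
  rewrite cardsD (setIidPr AX); lia.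
case: (IH _ HXA) => [[Y HY HYc]|[s [Hs Hsort Hsub]]]; first by left; exists Y.
case: s Hs Hsort Hsub => [//|w s'] Hs Hsort Hsub.
have : w \in X :\: A by apply: Hsub; rewrite inE eqxx.
rewrite !inE => /andP [wnA wX].
move: wnA; rewrite wX /= negb_forall => /existsP [u].
rewrite negb_imply negb_imply negbK => /andP [uX /andP [uw cuw]].
right; exists [:: u, w & s']; split => //=.
- by move: Hs => /= ->.
- by rewrite uw cuw.
- move=> y; rewrite inE => /orP [/eqP -> //|ys].
  have := Hsub y ys; rewrite inE => /andP [].
  by [].
Qed.

Lemma arrows_upper (a : nat) (E : rel 'I_a) (b : nat) :
  (1 <= a)%N -> (1 <= b)%N -> simple_graph E ->
  cyc_arrows E (@Pmon b) (1 + (a-1)*(b-1)).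
Proof.
move=> a1 b1 [Esym Eirr] c [csym cval].
set N := 1 + _.
have x0 : 'I_N := Ordinal (ltn0Sn ((a-1)*(b-1))).
have HX : ((a-1)*(b-1) < #|[set: 'I_N]|)%N by rewrite cardsT card_ord /N; lia.
case: (@upper_aux a _ c cval _ _ HX) => [[Y HY HYc]|[s [Hs Hsort Hsub]]].
  left.
  have Hsz : size (take a (enum Y)) = a.
    rewrite size_take -cardE; case: ltnP => // H; apply/eqP; rewrite eqn_leq HY; lia.
  have Hso : sorted (fun x y : 'I_N => (x < y)%N) (take a (enum Y)).
    apply: take_sorted.
    rewrite /enum_mem -enumT; apply: sorted_filter; first exact: ltn_trans.
    have := iota_ltn_sorted 0 N; rewrite -val_enum_ord sorted_map; exact.
  have [phi [phiI phiC phiE]] := @embed_seq a N x0 _ a1 Hsz Hso.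
  exists phi; split => //; split => // u v Euv.
  have uv : u != v by apply: contraTneq Euv => ->; rewrite Eirr.
  have puv : phi u != phi v by apply: contra uv => /eqP /phiI ->.
  have inY : forall k, phi k \in Y.
    move=> k; rewrite phiE.
    have : nth x0 (take a (enum Y)) k \in take a (enum Y) by rewrite mem_nth // Hsz.
    by move/mem_take; rewrite mem_enum.
  case: (ltngtP (phi u) (phi v)) => [lt|gt|eq].
  - exact: HYc.
  - by rewrite csym // HYc.
  - by move: puv; rewrite (val_inj eq) eqxx.
right.
have Hso : sorted (fun x y : 'I_N => (x < y)%N) s.
  by apply: sub_sorted Hsort => x y /andP [].
have Hsz : size s = b by rewrite Hs; lia.
have [phi [phiI phiC phiE]] := @embed_seq b N x0 _ b1 Hsz Hso.
exists phi; split => //; split => // u v.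
have step : forall i : 'I_b, forall j : 'I_b, i.+1 = j -> c (phi i) (phi j) = 2.
  move=> i j ij; rewrite !phiE -ij.
  move: Hsort => /(sortedP x0) /(_ i).
  by rewrite Hsz ij ltn_ord => /(_ isT) /andP [_ /eqP].
rewrite /Pmon => /orP [/eqP uv|/eqP vu]; first exact: step.
have ne : phi u != phi v.
  apply/negP => /eqP /phiI uv'; move: vu; rewrite uv'; lia.
by rewrite csym // step.
Qed.

Lemma path_lower (b n d : nat) (phi : 'I_b -> 'I_n) : (0 < d)%N ->
  (n <= d * (b-2))%N ->
  (forall k k' : 'I_b, (val k).+1 = val k' -> phi k %/ d != phi k' %/ d) ->
  cyc_increasing phi -> False.
Proof.
move=> d0 nle Hadj [t Hs].
case: b t phi nle Hadj Hs => [[]//|b'] t phi nle Hadj Hs.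
set b := b'.+1 in t phi nle Hadj Hs.
pose F k := val (phi (inord k)).
pose l := iota t (b - t) ++ iota 0 t.
have Hl : [seq val (phi k) | k <- rot t (enum 'I_b)] = map F l.
  rewrite (eq_map (g := fun k : 'I_b => F (val k))); last first.
    by move=> k; rewrite /F inord_val.
  rewrite (map_comp F val) map_rot val_enum_ord /rot drop_iota take_iota.
  rewrite /l add0n; congr (map F (_ ++ _)).
  by rewrite (minn_idPl (ltnW (ltn_ord t))).
rewrite Hl in Hs.
have szl : size l = b by rewrite /l size_cat !size_iota; have := ltn_ord t; lia.
have Gl : forall i, (i < b)%N -> nth 0 l i = if (i < b - t)%N then t + i else i - (b - t).
  move=> i ib; rewrite /l nth_cat size_iota; case: ifP => H.
    by rewrite nth_iota.
  rewrite nth_iota; first by rewrite add0n.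
  have := ltn_ord t; lia.
have step : forall i, (i.+1 < b)%N -> (F (nth 0 l i) < F (nth 0 l i.+1))%N.
  move=> i ib; move/(sortedP 0): Hs => /(_ i); rewrite size_map szl => /(_ ib).
  by rewrite !(nth_map 0) // szl; lia.
pose f k := F k %/ d.
have Fb : forall k, (F k < n)%N by move=> k; exact: ltn_ord.
have fb : forall k, (f k < b - 2)%N.
  move=> k; rewrite /f ltn_divLR //; have := Fb k; rewrite mulnC; lia.
have adj : forall k, (k.+1 < b)%N -> f k != f k.+1.
  move=> k kb; rewrite /f /F; apply: Hadj.
  change ((nat_of_ord (@inord b' k)).+1 = nat_of_ord (@inord b' k.+1)).
  rewrite !inordK //; lia.
have mono : forall x y, (F x < F y)%N -> (f x <= f y)%N.
  by move=> x y /ltnW; apply: leq_div2r.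
have D1 : forall k, (t <= k)%N -> (k.+1 < b)%N -> (f k < f k.+1)%N.
  move=> k tk kb; have := step (k - t); rewrite !Gl; try lia.
  have -> : (k - t < b - t)%N by lia.
  have -> : ((k - t).+1 < b - t)%N by lia.
  have -> : t + (k - t) = k by lia.
  have -> : t + (k - t).+1 = k.+1 by lia.
  move=> /(_ ltac:(lia)) /mono; rewrite leq_eqVlt => /orP [/eqP E|//].
  by move: (adj k kb); rewrite E eqxx.
have D2 : forall k, (k.+1 < t)%N -> (f k < f k.+1)%N.
  move=> k kt; have := ltn_ord t => tb.
  have := step (b - t + k); rewrite !Gl; try lia.
  have -> : (b - t + k < b - t)%N = false by lia.
  have -> : ((b - t + k).+1 < b - t)%N = false by lia.
  have -> : b - t + k - (b - t) = k by lia.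
  have -> : (b - t + k).+1 - (b - t) = k.+1 by lia.
  move=> /(_ ltac:(lia)) /mono; rewrite leq_eqVlt => /orP [/eqP E|//].
  by move: (adj k ltac:(lia)); rewrite E eqxx.
have D3 : (0 < t)%N -> (f (b - 1) <= f 0)%N.
  move=> t0; have := ltn_ord t => tb.
  have := step (b - t - 1); rewrite !Gl; try lia.
  have -> : (b - t - 1 < b - t)%N by lia.
  have -> : ((b - t - 1).+1 < b - t)%N = false by lia.
  have -> : t + (b - t - 1) = b - 1 by lia.
  have -> : (b - t - 1).+1 - (b - t) = 0 by lia.
  by move=> /(_ ltac:(lia)) /mono.
have C1 : forall m, (t + m < b)%N -> (f t + m <= f (t + m))%N.
  elim=> [|m IH] H; first by rewrite !addn0.
  have := IH ltac:(lia); have := D1 (t + m) ltac:(lia) ltac:(lia).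
  rewrite [t + m.+1]addnS; lia.
have C2 : forall m, (m < t)%N -> (f 0 + m <= f m)%N.
  elim=> [|m IH] H; first by rewrite !addn0.
  have := IH ltac:(lia); have := D2 m ltac:(lia); lia.
have := ltn_ord t => tb.
case: (posnP t) => [t0|t0].
  have := C1 (b - 1) ltac:(lia); rewrite t0 add0n; have := fb (b - 1); lia.
have := C1 (b - 1 - t) ltac:(lia); have -> : t + (b - 1 - t) = b - 1 by lia.
have := D3 t0; have := C2 (t - 1) ltac:(lia); have := fb (t - 1); lia.
Qed.

Lemma lower_nonarrow (a : nat) (E : rel 'I_a) (b : nat) :
  (1 <= a)%N -> (1 <= b)%N -> simple_graph E -> connected_graph E ->
  forall n, (n <= (a-1)*(b-2))%N -> ~ cyc_arrows E (@Pmon b) n.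
Proof.
move=> a1 b1 [Esym Eirr] Econ n.
case: (posnP n) => [->|n0] nle.
  move=> /(_ (fun _ _ => 1)) [].
    by split => [[]|[]].
  - by move=> [phi _]; case: (phi (Ordinal a1)).
  - by move=> [phi _]; case: (phi (Ordinal b1)).
set d := a - 1.
have d0 : (0 < d)%N by rewrite /d; move: nle; case: (a - 1) => //; rewrite mul0n; lia.
pose c := fun i j : 'I_n => if i %/ d == j %/ d then 1 else 2.
move=> /(_ c) [].
  split => i j _; rewrite /c; first by rewrite eq_sym.
  by case: ifP.
- move=> [phi [[phiI phiE] _]].
  pose u0 := Ordinal a1.
  have blk : forall u, phi u %/ d = phi u0 %/ d.
    move=> u; apply/eqP.
    have cl : closed E [pred v | phi v %/ d == phi u0 %/ d].
      move=> x y Exy /=; have := phiE _ _ Exy; rewrite /c.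
      by rewrite !inE /=; case: ifP => // /eqP ->.
    have := closed_connect cl (Econ u0 u); rewrite !inE /= eqxx.
    by move=> <-.
  pose g := fun u => Ordinal (ltn_pmod (phi u) d0).
  have gI : injective g.
    move=> u v /(congr1 val) /= H; apply: phiI; apply: val_inj.
    change (nat_of_ord (phi u) = nat_of_ord (phi v)); by rewrite (divn_eq (phi u) d) (divn_eq (phi v) d) H !blk.
  have := leq_card _ gI; rewrite !card_ord /d; lia.
- move=> [phi [[phiI phiE] phiC]].
  apply: (@path_lower b n d phi d0 _ _ phiC).
    exact: nle.
  move=> k k' kk'; have := phiE k k'; rewrite /Pmon kk' eqxx /= /c.
  by case: ifP => // _ /(_ isT).
Qed.

Theorem theorem4p5 (a : nat) (E : rel 'I_a) (b : nat) :
  (1 <= a)%N -> (1 <= b)%N ->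
  simple_graph E -> connected_graph E ->
  exists r : nat, is_Rcyc E (@Pmon b) r /\
    ((1 + (a%:Z - 1) * (b%:Z - 2) <= r%:Z)%R /\
     (r%:Z <= 1 + (a%:Z - 1) * (b%:Z - 1))%R).
Proof.
move=> a1 b1 Hs Hc.
have [r [Pr rle Hmin]] := @least_ex (cyc_arrows E (@Pmon b)) _ (@arrows_upper a E b a1 b1 Hs).
have lo : ((a-1)*(b-2) < r)%N.
  rewrite ltnNge; apply/negP => H; exact: (@lower_nonarrow a E b a1 b1 Hs Hc _ H Pr).
exists r; split; first by split.
clear Pr Hmin.
case: a a1 E Hs Hc lo rle => [//|a'] _ E Hs Hc lo rle.
case: b b1 Hs lo rle => [//|b'] _ Hs lo rle.
have -> : (a'.+1%:Z - 1 = a'%:Z)%R by lia.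
split.
  case: b' lo rle Hs => [|b] lo rle Hs.
    have : (a'%:Z * (0.+1%:Z - 2) <= 0)%R by rewrite mulrN1 oppr_le0.
    lia.
  have -> : (b.+2%:Z - 2 = b%:Z)%R by lia.
  rewrite -PoszM -PoszD lez_nat; move: lo; rewrite -addn2 addnK; lia.
have -> : (b'.+1%:Z - 1 = b'%:Z)%R by lia.
rewrite -PoszM -PoszD lez_nat; move: rle; rewrite subn1 /=; lia.
Qed.
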